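(* For every $\lambda>\lambda^*$, $e(\lambda)\in I_\lambda\cap(-\infty,0)$; that is, $e(\lambda)>-1/(\gamma b^* )$, $G(e(\lambda))<\lambda/a^*$, and $e(\lambda)<0$.
   Context: Standing setup. Let $\gamma>0$; let $a_1,\dots,a_p>0$ with weights $\omega_i>0$, $\sum_i\omega_i=1$, and $b_1,\dots,b_n>0$ with weights $\pi_j>0$, $\sum_j\pi_j=1$; put $a^*=\max_i a_i$, $b^*=\max_j b_j$. Let $\mu$ be the limiting spectral distribution of $\mathbf{N}\mathbf{N}^T$ where $\mathbf{N}=\mathbf{A}^{1/2}\mathbf{G}\mathbf{B}^{1/2}$ is $k\times l$, $\mathbf{G}$ has iid mean-zero entries of variance $1/l$, $k/l\to\gamma$, and the spectral distributions of $\mathbf{A},\mathbf{B}$ converge to $\nu=\sum_i\omega_i\delta_{a_i}$ and $\underline{\nu}=\sum_j\pi_j\delta_{b_j}$. $\mu$ is a compactly supported probability measure on $[0,\infty)$; $\lambda^*>0$ is the right endpoint of its support, and $s(\lambda)=\int\frac{d\mu(t)}{t-\lambda}$ for $\lambda>\lambda^*$. Define $G(e)=\sum_{j=1}^n\frac{b_j\pi_j}{1+\gamma b_j e}$, $J=\{e: e>-1/(\gamma b^* )\}$, and for $\lambda>0$, $I_\lambda=\{e\in J: G(e)<\lambda/a^*\}$. Define $F(\lambda,e)=e-\sum_{i=1}^p\frac{a_i\omega_i}{a_iG(e)-\lambda}$. It is known (master equations) that there is a continuous (indeed smooth) real function $e(\lambda)$ on $(\lambda^*,\infty)$, never equal to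 a pole $-1/(\gamma b_j)$ of $G$ and with $a_iG(e(\lambda))\ne\lambda$, satisfying $s(\lambda)=\sum_{i=1}^p\frac{\omega_i}{a_iG(e(\lambda))-\lambda}$ and $e(\lambda)=\sum_{i=1}^p\frac{a_i\omega_i}{a_iG(e(\lambda))-\lambda}$, i.e. $F(\lambda,e(\lambda))=0$. *)

(* Defs.v *)
From Stdlib Require Import Reals Lra Lia.
Open Scope R_scope.

Fixpoint fsum (n : nat) (f : nat -> R) : R :=
  match n with
  | O => 0
  | S k => fsum k f + f k
  end.

Definition is_fmax (p : nat) (a : nat -> R) (m : R) : Prop :=
  (exists i, (i < p)%nat /\ a i = m) /\ (forall i, (i < p)%nat -> a i <= m).

(* A probability measure mu on R is represented by its distribution function
   Fd(x) = mu((-oo, x]): nondecreasing, right-continuous, limits 0 and 1.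
   Supported in [0, oo) and compactly supported. *)
Definition is_cdf (Fd : R -> R) : Prop :=
  (forall x y, x <= y -> Fd x <= Fd y) /\
  (forall x, forall eps, eps > 0 -> exists del, del > 0 /\
       forall y, x <= y < x + del -> Rabs (Fd y - Fd x) < eps) /\
  (forall x, 0 <= Fd x <= 1).

Definition supported_compact_nonneg (Fd : R -> R) : Prop :=
  (forall x, x < 0 -> Fd x = 0) /\ (exists M, Fd M = 1).

(* l is the right endpoint of the support of mu, i.e. sup supp mu
   = min { x | Fd x = 1 } (for a compactly supported measure). *)
Definition right_endpoint (Fd : R -> R) (l : R) : Prop :=
  Fd l = 1 /\ forall x, x < l -> Fd x < 1.

Definition RS_sum (Fd f : R -> R) (lo hi : R) (n : nat) : R :=
  let h := (hi - lo) / INR n in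
  fsum n (fun k => f (lo + INR k * h) *
                   (Fd (lo + INR (S k) * h) - Fd (lo + INR k * h))).

(* v = int f dmu, for f continuous on [lo,hi] and mu carried by (lo,hi]
   (Riemann-Stieltjes integral, limit of uniform-partition sums). *)
Definition RS_integral (Fd f : R -> R) (lo hi v : R) : Prop :=
  Un_cv (fun n => RS_sum Fd f lo hi (S n)) v.

Definition Gfun (gamma : R) (n : nat) (b pi : nat -> R) (e : R) : R :=
  fsum n (fun j => b j * pi j / (1 + gamma * b j * e)).

Definition Ffun (gamma : R) (p n : nat) (a w b pi : nat -> R) (lam e : R) : R :=
  e - fsum p (fun i => a i * w i / (a i * Gfun gamma n b pi e - lam)).

(* Main.v *)
Require Import Defs.
From Stdlib Require Import Reals Lra Lia.
Open Scope R_scope.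

Lemma fsum_ext n f g : (forall k, (k < n)%nat -> f k = g k) -> fsum n f = fsum n g.
Proof. induction n; simpl; intros H; auto. rewrite IHn by (intros; apply H; lia). rewrite H by lia; auto. Qed.

Lemma fsum_le n f g : (forall k, (k < n)%nat -> f k <= g k) -> fsum n f <= fsum n g.
Proof. induction n; simpl; intros H; [lra|]. assert (fsum n f <= fsum n g) by (apply IHn; intros; apply H; lia). specialize (H n ltac:(lia)). lra. Qed.

Lemma fsum_plus n f g : fsum n (fun k => f k + g k) = fsum n f + fsum n g.
Proof. induction n; simpl; [lra|]. rewrite IHn; lra. Qed.

Lemma fsum_scal n c f : fsum n (fun k => c * f k) = c * fsum n f.
Proof. induction n; simpl; [lra|]. rewrite IHn; lra. Qed.

Lemma fsum_tele n u : fsum n (fun k => u (S k) - u k) = u n - u O.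
Proof. induction n; simpl; [lra|]. rewrite IHn; lra. Qed.

Lemma fsum_pos n f : (0 < n)%nat -> (forall k, (k < n)%nat -> 0 < f k) -> 0 < fsum n f.
Proof. induction n; simpl; intros Hn H; [lia|]. destruct n.
 - simpl. specialize (H O ltac:(lia)). lra.
 - assert (0 < fsum (S n) f) by (apply IHn; [lia| intros; apply H; lia]). specialize (H (S n) ltac:(lia)). lra. Qed.

Lemma ivt_up f a b c : a < b -> (forall x, a <= x <= b -> continuity_pt f x) ->
  f a < c -> c < f b -> exists z, a <= z <= b /\ f z = c.
Proof. intros Hab Hc H1 H2.
 destruct (Ranalysis5.IVT_interv (fun x => f x - c) a b) as [z [Hz Hfz]]; auto; try lra.
 - intros x Hx. apply continuity_pt_minus; [apply Hc; auto| apply continuity_pt_const; intros ? ?; auto].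
 - exists z; split; auto; lra. Qed.

Lemma ivt_down f a b c : a < b -> (forall x, a <= x <= b -> continuity_pt f x) ->
  c < f a -> f b < c -> exists z, a <= z <= b /\ f z = c.
Proof. intros Hab Hc H1 H2.
 destruct (Ranalysis5.IVT_interv (fun x => c - f x) a b) as [z [Hz Hfz]]; auto; try lra.
 - intros x Hx. apply continuity_pt_minus; [apply continuity_pt_const; intros ? ?; auto|apply Hc; auto].
 - exists z; split; auto; lra. Qed.

Lemma Gfun_cont gamma n b pi x : (forall j, (j < n)%nat -> 1 + gamma * b j * x <> 0) ->
  continuity_pt (Gfun gamma n b pi) x.
Proof. unfold Gfun. induction n; intros H; simpl.
 - apply continuity_pt_const; intros ? ?; auto.
 - apply (continuity_pt_plus (fun e => fsum n (fun j => b j * pi j / (1 + gamma * b j * e)))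
      (fun e => b n * pi n / (1 + gamma * b n * e))).
   + apply IHn; intros; apply H; lia.
   + apply (continuity_pt_div (fun _ => b n * pi n) (fun e => 1 + gamma * b n * e)).
     * apply continuity_pt_const; intros ? ?; auto.
     * apply (continuity_pt_plus (fun _ => 1) (fun e => gamma * b n * e)).
       -- apply continuity_pt_const; intros ? ?; auto.
       -- apply (continuity_pt_scal id). apply derivable_continuous_pt, derivable_pt_id.
     * apply H; lia.
Qed.

Definition qf (lam t : R) := 1 + lam * / (t - lam).

Lemma inv_neg_eq a b : b < a -> / (b - a) = - / (a - b).
Proof. intros. field. lra. Qed.

Lemma q_dec lam t1 t2 : 0 < lam -> t1 <= t2 < lam -> qf lam t2 <= qf lam t1.
Proof. intros Hl [H1 H2]. unfold qf. rewrite (inv_neg_eq lam t1), (inv_neg_eq lam t2) by lra.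
 assert (/ (lam - t1) <= / (lam - t2)) by (apply Rinv_le_contravar; lra).
 assert (lam * / (lam - t1) <= lam * / (lam - t2)) by (apply Rmult_le_compat_l; lra).
 lra. Qed.

Lemma q_nonpos lam t : 0 <= t < lam -> qf lam t <= 0.
Proof. intros [H1 H2]. unfold qf.
 replace (1 + lam * / (t - lam)) with (- (t * / (lam - t))) by (field; lra).
 assert (0 < / (lam - t)) by (apply Rinv_0_lt_compat; lra). nra. Qed.

Lemma q_neg lam t : 0 < t < lam -> qf lam t < 0.
Proof. intros [H1 H2]. unfold qf.
 replace (1 + lam * / (t - lam)) with (- (t * / (lam - t))) by (field; lra).
 assert (0 < / (lam - t)) by (apply Rinv_0_lt_compat; lra). nra. Qed.

Lemma q_lip lam hi x y : 0 < lam -> x <= y -> y <= hi -> hi < lam ->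
  qf lam x <= qf lam y + lam / (lam - hi)^2 * (y - x).
Proof. intros Hl Hxy Hy Hh. unfold qf.
 replace (1 + lam * / (x - lam)) with (1 + lam * / (y - lam) + lam * (y - x) * / ((lam - x) * (lam - y))) by (field; lra).
 assert (/ ((lam - x) * (lam - y)) <= / (lam - hi)^2).
 { apply Rinv_le_contravar. nra. nra. }
 unfold Rdiv. assert (0 <= lam * (y - x)) by nra. nra. Qed.

Lemma pointwise_up (Fd : R -> R) lam hi m x y :
  (forall u v, u <= v -> Fd u <= Fd v) -> (forall u, u < 0 -> Fd u = 0) ->
  0 < lam -> 0 < m -> m < lam -> x <= y -> y <= hi -> hi < lam ->
  (Fd y - Fd x) + lam * (/ (x - lam) * (Fd y - Fd x)) <=
  qf lam m * (Rmax (Fd y) (Fd m) - Rmax (Fd x) (Fd m)) + lam / (lam - hi)^2 * (y - x) * (Fd y - Fd x).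
Proof. intros Hmon Hsup Hl Hm Hml Hxy Hy Hh.
 assert (HD : 0 <= Fd y - Fd x) by (pose proof (Hmon x y Hxy); lra).
 replace ((Fd y - Fd x) + lam * (/ (x - lam) * (Fd y - Fd x))) with (qf lam x * (Fd y - Fd x)) by (unfold qf; ring).
 pose proof (q_lip lam hi x y Hl Hxy Hy Hh) as HL.
 assert (qf lam y * (Fd y - Fd x) <= qf lam m * (Rmax (Fd y) (Fd m) - Rmax (Fd x) (Fd m))).
 { destruct (Rlt_or_le y 0) as [Hy0|Hy0].
   - rewrite (Hsup y Hy0), (Hsup x ltac:(lra)). replace (0 - 0) with 0 by ring. rewrite Rminus_diag. lra.
   - destruct (Rlt_or_le y m) as [Hym|Hym].
     + assert (Fd y <= Fd m) by (apply Hmon; lra). assert (Fd x <= Fd m) by (apply Hmon; lra).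
       rewrite !Rmax_right by lra. rewrite Rminus_diag.
       pose proof (q_nonpos lam y ltac:(lra)). nra.
     + assert (Fd m <= Fd y) by (apply Hmon; lra). rewrite Rmax_left by lra.
       pose proof (q_dec lam m y Hl ltac:(lra)). pose proof (q_neg lam m ltac:(lra)).
       assert (Fd y - Fd x <= Fd y - Rmax (Fd x) (Fd m) <= Fd y - Fd x \/ Fd y - Rmax (Fd x) (Fd m) <= Fd y - Fd x).
       { right. pose proof (Rmax_l (Fd x) (Fd m)). lra. }
       assert (0 <= Fd y - Rmax (Fd x) (Fd m)) by (apply Rmax_case; lra).
       assert (Fd y - Rmax (Fd x) (Fd m) <= Fd y - Fd x) by (pose proof (Rmax_l (Fd x) (Fd m)); lra).
       nra. }
 nra. Qed.

Lemma cv_ge u l c N0 : Un_cv u l -> (forall n, (n >= N0)%nat -> c <= u n) -> c <= l.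
Proof. intros Hu H. destruct (Rle_or_lt c l) as [|Hlt]; auto.
 destruct (Hu (c - l) ltac:(lra)) as [N HN]. specialize (HN (max N N0) ltac:(lia)).
 specialize (H (max N N0) ltac:(lia)). unfold R_dist in HN. apply Rabs_def2 in HN. lra. Qed.

Lemma cv_le u l c N0 : Un_cv u l -> (forall n, (n >= N0)%nat -> u n <= c) -> l <= c.
Proof. intros Hu H. destruct (Rle_or_lt l c) as [|Hlt]; auto.
 destruct (Hu (l - c) ltac:(lra)) as [N HN]. specialize (HN (max N N0) ltac:(lia)).
 specialize (H (max N N0) ltac:(lia)). unfold R_dist in HN. apply Rabs_def2 in HN. lra. Qed.

Lemma meas_bounds Fd lstar lam sv lo : is_cdf Fd -> supported_compact_nonneg Fd ->
  right_endpoint Fd lstar -> 0 < lstar -> lstar < lam -> lo < 0 ->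
  RS_integral Fd (fun t => / (t - lam)) lo lstar sv ->
  qf lam lstar <= 1 + lam * sv /\ 1 + lam * sv < 0.
Proof.
 intros [Hmon [_ Hrng]] [Hsup _] [Hl1 Hl2] Hlp Hlam Hlo Hcv.
 unfold RS_integral in Hcv.
 assert (Hlam0 : 0 < lam) by lra.
 assert (Key : forall N : nat, (0 < N)%nat ->
   exists hh (x : nat -> R), hh = (lstar - lo) / INR N /\
   0 < hh /\ x N = lstar /\ x O = lo /\ (forall k, x (S k) = x k + hh) /\
   (forall k, (k <= N)%nat -> lo <= x k <= lstar) /\
   1 + lam * RS_sum Fd (fun t => / (t - lam)) lo lstar N =
   fsum N (fun k => (Fd (x (S k)) - Fd (x k)) + lam * (/ (x k - lam) * (Fd (x (S k)) - Fd (x k)))) /\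
   fsum N (fun k => Fd (x (S k)) - Fd (x k)) = 1).
 { intros N HN. set (hh := (lstar - lo) / INR N). set (x := fun k : nat => lo + INR k * hh).
   exists hh, x. split; [reflexivity|].
   assert (HNp : 0 < INR N) by (apply lt_0_INR; lia).
   assert (Hhh : 0 < hh) by (unfold hh; apply Rdiv_lt_0_compat; lra).
   assert (HxN : x N = lstar) by (unfold x, hh; field; lra).
   assert (Hx0 : x O = lo) by (unfold x; simpl; ring).
   assert (Hsum : fsum N (fun k => Fd (x (S k)) - Fd (x k)) = 1).
   { rewrite (fsum_tele N (fun k => Fd (x k))). rewrite HxN, Hx0. rewrite (Hsup lo Hlo). lra. }
   split; [auto|split;[auto|split;[auto|split;[|split;[|split]]]]].
   - intros k. unfold x. rewrite S_INR. ring.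
   - intros k Hk. unfold x. assert (0 <= INR k <= INR N) by (split; [apply pos_INR| apply le_INR; lia]).
     split; [nra|]. replace lstar with (lo + INR N * hh) by (unfold hh; field; lra). nra.
   - rewrite fsum_plus, fsum_scal, Hsum. unfold RS_sum. fold hh. reflexivity.
   - exact Hsum. }
 split.
 -
   assert (Hb : forall n, (n >= 0)%nat -> (qf lam lstar - 1) / lam <= RS_sum Fd (fun t => / (t - lam)) lo lstar (S n)).
   { intros n _. destruct (Key (S n) ltac:(lia)) as [hh [x [Hhdef [Hhh [HxN [Hx0 [HxS [Hxr [Heq Hsum]]]]]]]]].
     assert (qf lam lstar <= 1 + lam * RS_sum Fd (fun t => / (t - lam)) lo lstar (S n)).
     { rewrite Heq. replace (qf lam lstar) with (fsum (S n) (fun k => qf lam lstar * (Fd (x (S k)) - Fd (x k))))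
         by (rewrite fsum_scal, Hsum; ring).
       apply fsum_le. intros k Hk.
       assert (0 <= Fd (x (S k)) - Fd (x k)) by (pose proof (Hmon (x k) (x (S k)) ltac:(rewrite HxS; lra)); lra).
       replace (Fd (x (S k)) - Fd (x k) + lam * (/ (x k - lam) * (Fd (x (S k)) - Fd (x k))))
         with (qf lam (x k) * (Fd (x (S k)) - Fd (x k))) by (unfold qf; ring).
       pose proof (q_dec lam (x k) lstar Hlam0 ltac:(pose proof (Hxr k ltac:(lia)); lra)). nra. }
     apply (Rmult_le_reg_l lam); auto. unfold Rdiv. replace (lam * ((qf lam lstar - 1) * / lam)) with (qf lam lstar - 1) by (field; lra). lra. }
   pose proof (cv_ge _ _ _ _ Hcv Hb) as H.
   apply (Rmult_le_compat_l lam) in H; [|lra]. unfold Rdiv in H.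
   replace (lam * ((qf lam lstar - 1) * / lam)) with (qf lam lstar - 1) in H by (field; lra). lra.
 - set (m := lstar / 2).
   assert (Hm : 0 < m < lstar) by (unfold m; lra).
   assert (HFm : Fd m < 1) by (apply Hl2; lra).
   assert (HFm0 : 0 <= Fd m) by (apply Hrng).
   assert (Hqm : qf lam m < 0) by (apply q_neg; lra).
   set (C := lam / (lam - lstar)^2).
   assert (HC : 0 < C) by (unfold C; apply Rdiv_lt_0_compat; [lra| apply pow_lt; lra]).
   set (kap := - (qf lam m * (1 - Fd m)) / 2).
   assert (Hkap : 0 < kap) by (unfold kap; nra).
   destruct (INR_archimed kap (C * (lstar - lo)) Hkap) as [N0 HN0].
   assert (Hb : forall n, (n >= N0)%nat -> RS_sum Fd (fun t => / (t - lam)) lo lstar (S n) <= (- kap - 1) / lam).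
   { intros n Hn. destruct (Key (S n) ltac:(lia)) as [hh [x [Hhdef [Hhh [HxN [Hx0 [HxS [Hxr [Heq Hsum]]]]]]]]].
     assert (Hch : C * hh <= kap).
     { assert (INR N0 <= INR (S n)) by (apply le_INR; lia).
       assert (HNp : 0 < INR (S n)) by (apply lt_0_INR; lia).
       rewrite Hhdef. replace (C * ((lstar - lo) / INR (S n))) with (C * (lstar - lo) / INR (S n)) by (field; lra).
       apply (Rmult_le_reg_r (INR (S n))); auto. unfold Rdiv. rewrite Rmult_assoc, Rinv_l by lra. nra. }
     assert (1 + lam * RS_sum Fd (fun t => / (t - lam)) lo lstar (S n) <= - kap).
     { rewrite Heq.
       apply Rle_trans with (fsum (S n) (fun k => qf lam m * (Rmax (Fd (x (S k))) (Fd m) - Rmax (Fd (x k)) (Fd m))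
                                          + C * hh * (Fd (x (S k)) - Fd (x k)))).
       - apply fsum_le. intros k Hk. pose proof (Hxr k ltac:(lia)). pose proof (Hxr (S k) ltac:(lia)).
         replace (C * hh) with (C * (x (S k) - x k)) by (rewrite HxS; ring).
         unfold C. apply pointwise_up; auto; try lra. rewrite HxS; lra.
       - rewrite fsum_plus, fsum_scal, fsum_scal, Hsum.
         rewrite (fsum_tele (S n) (fun k => Rmax (Fd (x k)) (Fd m))). rewrite HxN, Hx0.
         rewrite Hl1, (Hsup lo Hlo). rewrite Rmax_left by lra. rewrite Rmax_right by lra.
         unfold kap in *. nra. }
     apply (Rmult_le_reg_l lam); auto. unfold Rdiv. replace (lam * ((- kap - 1) * / lam)) with (- kap - 1) by (field; lra). lra. }
   pose proof (cv_le _ _ _ _ Hcv Hb) as H.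
   apply (Rmult_le_compat_l lam) in H; [|lra]. unfold Rdiv in H.
   replace (lam * ((- kap - 1) * / lam)) with (- kap - 1) in H by (field; lra). lra.
Qed.

Lemma term_lower ai wi g l astar B : 0 < ai -> ai <= astar -> 0 < wi -> 0 < g -> g < B ->
  2 * astar * B < l -> - (2 * astar * wi / l) <= ai * wi / (ai * g - l).
Proof. intros. assert (0 < astar) by lra. assert (HB: 0 < B) by lra. assert (0 < l) by nra.
 assert (Hd : l / 2 < l - ai * g).
 { assert (ai * g <= astar * B) by (apply Rmult_le_compat; lra). lra. }
 replace (ai * wi / (ai * g - l)) with (- (ai * wi * / (l - ai * g))) by (field; repeat split; lra).
 apply Ropp_le_contravar. unfold Rdiv.
 assert (/ (l - ai * g) <= 2 * / l).
 { replace (2 * / l) with (/ (l / 2)) by (field; lra). apply Rinv_le_contravar; lra. }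
 assert (0 < / (l - ai*g)) by (apply Rinv_0_lt_compat; lra).
 assert (ai * wi <= astar * wi) by (apply Rmult_le_compat_r; lra).
 assert (ai * wi * / (l - ai * g) <= astar * wi * (2 * / l)).
 { apply Rmult_le_compat; nra. }
 lra. Qed.

Lemma term_upper bj pj gamma x bstar : 0 < bj -> bj <= bstar -> 0 < pj -> 0 < gamma -> x < 0 ->
  0 < 1 + gamma * bstar * x -> bj * pj / (1 + gamma * bj * x) <= bstar * pj / (1 + gamma * bstar * x).
Proof. intros. assert (1 + gamma * bstar * x <= 1 + gamma * bj * x).
 { assert (gamma * bj <= gamma * bstar) by (apply Rmult_le_compat_l; lra). nra. }
 unfold Rdiv. apply Rmult_le_compat.
 - nra. - left; apply Rinv_0_lt_compat; lra. - apply Rmult_le_compat_r; lra.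
 - apply Rinv_le_contravar; lra. Qed.

Theorem proposition3p1
  (gamma : R) (p n : nat) (a w b pi : nat -> R) (astar bstar : R)
  (Fd : R -> R) (lstar : R) (s e : R -> R)
  (Hgamma : 0 < gamma)
  (Hp : (0 < p)%nat) (Hn : (0 < n)%nat)
  (Ha : forall i, (i < p)%nat -> 0 < a i)
  (Hw : forall i, (i < p)%nat -> 0 < w i)
  (Hwsum : fsum p w = 1)
  (Hb : forall j, (j < n)%nat -> 0 < b j)
  (Hpi : forall j, (j < n)%nat -> 0 < pi j)
  (Hpisum : fsum n pi = 1)
  (Hastar : is_fmax p a astar)
  (Hbstar : is_fmax n b bstar)
  (Hcdf : is_cdf Fd)
  (Hsupp : supported_compact_nonneg Fd)
  (Hlstar : right_endpoint Fd lstar)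
  (Hlpos : 0 < lstar)
  (Hs : forall lam, lstar < lam ->
          RS_integral Fd (fun t => / (t - lam)) (-1) lstar (s lam))
  (He_cont : forall lam, lstar < lam -> continuity_pt e lam)
  (He_der : forall lam, lstar < lam -> derivable_pt e lam)
  (He_pole : forall lam j, lstar < lam -> (j < n)%nat -> e lam <> - / (gamma * b j))
  (He_ne : forall lam i, lstar < lam -> (i < p)%nat ->
             a i * Gfun gamma n b pi (e lam) <> lam)
  (He_s : forall lam, lstar < lam ->
            s lam = fsum p (fun i => w i / (a i * Gfun gamma n b pi (e lam) - lam)))
  (He_F : forall lam, lstar < lam -> Ffun gamma p n a w b pi lam (e lam) = 0) :
  forall lam, lstar < lam ->
    - / (gamma * bstar) < e lam /\
    Gfun gamma n b pi (e lam) < lam / astar /\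
    e lam < 0.
Proof.
 intros lam0 Hlam0.
 destruct Hastar as [[i0 [Hi0 Hai0]] Hamax]. destruct Hbstar as [[j0 [Hj0 Hbj0]] Hbmax].
 assert (Has : 0 < astar) by (rewrite <- Hai0; apply Ha; auto).
 assert (Hbs : 0 < bstar) by (rewrite <- Hbj0; apply Hb; auto).
 set (gE := fun l => Gfun gamma n b pi (e l)).
 assert (Halg : forall l, lstar < l -> gE l * e l = 1 + l * s l).
 { intros l Hl. unfold gE. set (g := Gfun gamma n b pi (e l)).
   assert (HeF := He_F l Hl). unfold Ffun in HeF. fold g in HeF.
   assert (Hee : e l = fsum p (fun i => a i * w i / (a i * g - l))) by lra.
   rewrite (He_s l Hl). fold g. rewrite Hee.
   rewrite <- fsum_scal, <- fsum_scal, <- Hwsum, <- fsum_plus.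
   apply fsum_ext. intros i Hi. assert (a i * g - l <> 0) by (apply Rminus_eq_contra, He_ne; auto).
   field; auto. }
 assert (H1 : forall l, lstar < l -> - (lstar / (l - lstar)) <= gE l * e l /\ gE l * e l < 0).
 { intros l Hl. rewrite Halg by auto.
   destruct (meas_bounds Fd lstar l (s l) (-1) Hcdf Hsupp Hlstar Hlpos Hl ltac:(lra) (Hs l Hl)) as [Hq1 Hq2].
   unfold qf in Hq1. replace (1 + l * / (lstar - l)) with (- (lstar / (l - lstar))) in Hq1 by (field; lra).
   split; lra. }
 assert (Hnp : forall l j, lstar < l -> (j < n)%nat -> 1 + gamma * b j * e l <> 0).
 { intros l j Hl Hj Heq. apply (He_pole l j Hl Hj). assert (0 < b j) by auto.
   assert (gamma * b j <> 0) by (apply Rgt_not_eq, Rmult_lt_0_compat; auto).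
   replace (e l) with ((1 + gamma * b j * e l - 1) / (gamma * b j)) by (field; split; lra).
   rewrite Heq. field; split; lra. }
 assert (HeC : forall l, lstar < l -> continuity_pt e l) by auto.
 assert (HkC : forall l, lstar < l -> continuity_pt (fun l => astar * gE l - l) l).
 { intros l Hl. apply (continuity_pt_minus (fun l => astar * gE l) id).
   - apply (continuity_pt_scal gE). unfold gE.
     apply (continuity_pt_comp e (Gfun gamma n b pi)); auto. apply Gfun_cont. intros; apply Hnp; auto.
   - apply derivable_continuous_pt, derivable_pt_id. }
 assert (Hneg : forall l, lstar < l -> e l < 0).
 { intros l Hl. destruct (Rlt_or_le (e l) 0) as [|Hge]; auto. exfalso.
   assert (0 < gE l).
   { unfold gE, Gfun. apply fsum_pos; auto. intros j Hj. assert (0 < b j) by auto. assert (0 < pi j) by auto.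
     apply Rdiv_lt_0_compat. nra. assert (0 <= gamma * b j * e l) by (apply Rmult_le_pos; nra). lra. }
   destruct (H1 l Hl). nra. }
 set (B := gamma * bstar).
 assert (HB : 0 < B) by (unfold B; nra).
 assert (Hpole0 : forall l, lstar < l -> e l <> - / B).
 { intros l Hl. unfold B. rewrite <- Hbj0. apply He_pole; auto. }
 assert (HinvB : 0 < / B) by (apply Rinv_0_lt_compat; auto).
 assert (HJ : - / B < e lam0).
 { destruct (Rtotal_order (- / B) (e lam0)) as [Hlt|[Heq|Hgt]]; auto.
   + exfalso; apply (Hpole0 lam0 Hlam0); auto.
   + exfalso.
     set (l1 := Rmax (Rmax lam0 (2 * lstar)) (2 * astar * B) + 1).
     assert (Hl1a : lam0 < l1) by (unfold l1; pose proof (Rmax_l (Rmax lam0 (2*lstar)) (2*astar*B)); pose proof (Rmax_l lam0 (2*lstar)); lra).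
     assert (Hl1b : 2 * lstar < l1) by (unfold l1; pose proof (Rmax_l (Rmax lam0 (2*lstar)) (2*astar*B)); pose proof (Rmax_r lam0 (2*lstar)); lra).
     assert (Hl1c : 2 * astar * B < l1) by (unfold l1; pose proof (Rmax_r (Rmax lam0 (2*lstar)) (2*astar*B)); lra).
     assert (Hl1 : lstar < l1) by lra.
     assert (Hx : e l1 < - / B).
     { destruct (Rtotal_order (e l1) (- / B)) as [|[Heq|Hgt2]]; auto.
       - exfalso; apply (Hpole0 l1 Hl1); auto.
       - destruct (ivt_up e lam0 l1 (- / B) Hl1a) as [z [Hz Hez]]; auto.
         + intros; apply HeC; lra.
         + exfalso; apply (Hpole0 z ltac:(lra)); auto. }
     set (x := e l1) in *. set (g := gE l1).
     destruct (H1 l1 Hl1) as [Hge Hlt0]. fold x g in Hge, Hlt0.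
     assert (Hfrac : lstar / (l1 - lstar) <= 1).
     { apply (Rmult_le_reg_r (l1 - lstar)); [lra|]. unfold Rdiv. rewrite Rmult_assoc, Rinv_l by lra. lra. }
     assert (Hx0 : x < 0) by lra.
     assert (Hg0 : 0 < g) by nra.
     assert (HxB : x * B < -1).
     { assert (x * B < - / B * B) by (apply Rmult_lt_compat_r; auto). rewrite <- Ropp_mult_distr_l, Rinv_l in H by lra. lra. }
     assert (HgB : g < B) by nra.
     assert (Hex : x = fsum p (fun i => a i * w i / (a i * g - l1))).
     { assert (HeF := He_F l1 Hl1). unfold Ffun in HeF. fold x in HeF. unfold g, gE. fold x. lra. }
     assert (x >= - (2 * astar / l1)).
     { rewrite Hex. replace (- (2 * astar / l1)) with (- (2 * astar / l1) * fsum p w) by (rewrite Hwsum; ring).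
       rewrite <- fsum_scal. apply Rle_ge, fsum_le. intros i Hi.
       replace (- (2 * astar / l1) * w i) with (- (2 * astar * w i / l1)) by (field; lra).
       apply (term_lower _ _ _ _ _ B); auto. }
     assert (2 * astar / l1 <= / B).
     { apply (Rmult_le_reg_r (l1 * B)); [nra|]. unfold Rdiv.
       replace (2 * astar * / l1 * (l1 * B)) with (2 * astar * B) by (field; lra).
       replace (/ B * (l1 * B)) with l1 by (field; lra). lra. }
     lra. }
 split; [unfold B in HJ; exact HJ|split; [|apply Hneg; auto]].
 set (l0 := lam0) in *.
   destruct (Rlt_or_le (gE l0) (l0 / astar)) as [|Hge]; [exact H|exfalso].
   assert (Hk0 : 0 < astar * gE l0 - l0).
   { assert (astar * gE l0 <> l0) by (rewrite <- Hai0; apply He_ne; auto).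
     assert (l0 <= astar * gE l0).
     { apply (Rmult_le_compat_l astar) in Hge; [|lra]. unfold Rdiv in Hge.
       rewrite <- Rmult_assoc, (Rmult_comm astar l0), Rmult_assoc, Rinv_r, Rmult_1_r in Hge; lra. }
     lra. }
   set (l1 := Rmax (Rmax l0 (2 * lstar)) (astar * bstar * (1 + gamma)) + 1).
   assert (Hl1a : l0 < l1) by (unfold l1; pose proof (Rmax_l (Rmax l0 (2*lstar)) (astar * bstar * (1 + gamma))); pose proof (Rmax_l l0 (2*lstar)); lra).
   assert (Hl1b : 2 * lstar < l1) by (unfold l1; pose proof (Rmax_l (Rmax l0 (2*lstar)) (astar * bstar * (1 + gamma))); pose proof (Rmax_r l0 (2*lstar)); lra).
   assert (Hl1c : astar * bstar * (1 + gamma) < l1) by (unfold l1; pose proof (Rmax_r (Rmax l0 (2*lstar)) (astar * bstar * (1 + gamma))); lra).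
   assert (Hl1 : lstar < l1) by lra.
   assert (HxJ : - / B < e l1).
   { destruct (Rtotal_order (e l1) (- / B)) as [Hlt2|[Heq|Hgt2]]; auto.
     - destruct (ivt_down e l0 l1 (- / B) Hl1a) as [z [Hz Hez]]; auto.
       + intros; apply HeC; lra.
       + exfalso; apply (Hpole0 z ltac:(lra)); auto.
     - exfalso; apply (Hpole0 l1 Hl1); auto. }
   assert (Hk1 : 0 < astar * gE l1 - l1).
   { destruct (Rtotal_order (astar * gE l1 - l1) 0) as [Hlt2|[Heq|Hgt2]]; auto.
     - destruct (ivt_down (fun l => astar * gE l - l) l0 l1 0 Hl1a) as [z [Hz Hez]]; auto.
       + intros; apply HkC; lra.
       + exfalso; apply (He_ne z i0 ltac:(lra) Hi0). rewrite Hai0. unfold gE in Hez. lra.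
     - exfalso; apply (He_ne l1 i0 Hl1 Hi0). rewrite Hai0. unfold gE in Heq. lra. }
   set (x := e l1) in *. set (g := gE l1) in *.
   destruct (H1 l1 Hl1) as [Hge1 Hlt1]. fold x g in Hge1, Hlt1.
   assert (Hfrac : lstar / (l1 - lstar) <= 1).
   { apply (Rmult_le_reg_r (l1 - lstar)); [lra|]. unfold Rdiv. rewrite Rmult_assoc, Rinv_l by lra. lra. }
   assert (Hx0 : x < 0) by (apply Hneg; auto).
   set (d := 1 + gamma * bstar * x).
   assert (Hd : 0 < d).
   { unfold d. assert (- / B * B < x * B) by (apply Rmult_lt_compat_r; auto).
     rewrite <- Ropp_mult_distr_l, Rinv_l in H by lra. unfold B in H. lra. }
   assert (Hgd : g <= bstar / d).
   { unfold g, gE, Gfun. fold x.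
     replace (bstar / d) with (bstar / d * fsum n pi) by (rewrite Hpisum; ring).
     rewrite <- fsum_scal. apply fsum_le. intros j Hj.
     replace (bstar / d * pi j) with (bstar * pi j / (1 + gamma * bstar * x)) by (unfold d in *; field; lra).
     apply term_upper; auto. }
   assert (Hgd2 : g * d <= bstar).
   { assert (bstar / d * d = bstar) by (field; lra).
     apply (Rmult_le_compat_r d) in Hgd; lra. }
   assert (HgB1 : g <= bstar * (1 + gamma)).
   { unfold d in Hgd2. assert (g * x >= -1) by lra.
     assert (0 < gamma * bstar) by nra.
     assert (gamma * bstar * (g * x + 1) >= 0) by (apply Rle_ge, Rmult_le_pos; lra).
     nra. }
   nra.
Qed.
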